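(* Let $C$ be an $(\epsilon,\delta)$-AWTP code of length $N$ over alphabet $\Sigma$ for a $(\rho_r,\rho_w)$-AWTP channel, with $\epsilon>0$ sufficiently small, and let the message $M$ be uniformly distributed on $\mathcal M$. Let $S_r^1\subseteq[N]$ with $|S_r^1|=\rho_rN$ be a read set of the adversary strategy described in the context, and let $C_{S_r^1}$ be the random variable given by the components of the codeword $\mathsf{Enc}(M)$ on $S_r^1$. Then \[ \mathsf H(M)-\mathsf H(M\mid C_{S_r^1})\le 2\epsilon\rho_rN\log\frac{|\Sigma|}{\epsilon}. \]
   Context: Definitions of $(\rho_r,\rho_w)$-AWTP channel and $(\epsilon,\delta)$-AWTP code: $\Sigma$ finite additive group, $[N]=\{1,\dots,N\}$; the adversary chooses a read set $S_r$ with $|S_r|\le\rho_rN$ and sees the codeword on $S_r$, and a write set $S_w$ with $|S_w|\le\rho_wN$ and adds an error vector supported in $S_w$; secrecy means the statistical distance between adversary views for any two messages is at most $\epsilon$, reliability means decoding error probability at most $\delta$. The adversary strategy considered: before transmission the adversary fixes two pairs $(S_r^i,S_w^i)$, $i=1,2$, with $|S_r^i|=\rho_rN$, $|S_w^i|=\rho_wN$, $|S_r^i\cup S_w^i|=\rho N$ for some $0\le\rho\le1$, and $S_r^1\cap S_w^2=\emptyset$; it chooses pair $i$ with probability $1/2$, reads the codeword on $S_r^i$, and adds a uniformly random error on the positions of $S_w^i$. $\log$ is base 2 and $\mathsf H$ denotes Shannon entropy. *)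

(* Defs.v *)
From HB Require Import structures.
From mathcomp Require Import all_boot all_algebra.
From Stdlib Require Import Reals.

Set Implicit Arguments.
Unset Strict Implicit.
Unset Printing Implicit Defensive.

Lemma Rplus_assoc_ssr : associative Rplus.
Proof. by move=> x y z; rewrite Rplus_assoc. Qed.
HB.instance Definition _ :=
  Monoid.isComLaw.Build R R0 Rplus Rplus_assoc_ssr Rplus_comm Rplus_0_l.

Local Open Scope R_scope.

Definition rsum (T : finType) (f : T -> R) : R := \big[Rplus/R0]_(t : T) f t.

Definition log2 (x : R) : R := ln x / ln 2.

Definition xlogx (x : R) : R := if Rle_dec x 0 then 0 else x * log2 x.

Definition entropy (T : finType) (p : T -> R) : R := - rsum (fun t => xlogx (p t)).

Definition is_pmf (T : finType) (p : T -> R) : Prop :=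
  (forall t, 0 <= p t) /\ rsum p = 1.

Definition marg2 (A B : finType) (p : A -> B -> R) (b : B) : R := rsum (fun a => p a b).
Definition cond_entropy (A B : finType) (p : A -> B -> R) : R :=
  rsum (fun b => marg2 p b * entropy (fun a => p a b / marg2 p b)).

Definition stat_dist (T : finType) (p q : T -> R) : R :=
  / 2 * rsum (fun t => Rabs (p t - q t)).

Definition word (Sigma : finZmodType) (N : nat) := {ffun 'I_N -> Sigma}.

(* The codeword seen on a read set S (other positions masked by 0). *)
Definition restrict (Sigma : finZmodType) (N : nat) (S : {set 'I_N}) (c : word Sigma N)
  : word Sigma N := [ffun i => if i \in S then c i else GRing.zero].

(* Randomized encoder: Enc m is the distribution of Enc(m) on codewords.
   Distribution of the adversary's view (Enc(m) restricted to S). *)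
Definition view_dist (Sigma : finZmodType) (N : nat) (Msg : finType)
  (Enc : Msg -> word Sigma N -> R) (S : {set 'I_N}) (m : Msg) (v : word Sigma N) : R :=
  \big[Rplus/R0]_(c : word Sigma N | restrict S c == v) Enc m c.

Definition awtp_secret (Sigma : finZmodType) (N : nat) (Msg : finType)
  (Enc : Msg -> word Sigma N -> R) (rho_r eps : R) : Prop :=
  forall (S : {set 'I_N}) (m m' : Msg),
    INR #|S| <= rho_r * INR N ->
    stat_dist (view_dist Enc S m) (view_dist Enc S m') <= eps.

(* A (deterministic) adversary: read set S_r with |S_r| <= rho_r N, write set
   S_w with |S_w| <= rho_w N, and an error function f which depends only on
   the codeword on S_r and is supported in S_w. (Randomized adversaries are
   mixtures of these.) *)
Definition valid_adversary (Sigma : finZmodType) (N : nat) (rho_r rho_w : R)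
  (Sr Sw : {set 'I_N}) (f : word Sigma N -> word Sigma N) : Prop :=
  INR #|Sr| <= rho_r * INR N /\ INR #|Sw| <= rho_w * INR N /\
  (forall c c', restrict Sr c = restrict Sr c' -> f c = f c') /\
  (forall c i, i \notin Sw -> f c i = GRing.zero).

Definition awtp_reliable (Sigma : finZmodType) (N : nat) (Msg : finType)
  (Enc : Msg -> word Sigma N -> R) (Dec : word Sigma N -> Msg) (rho_r rho_w delta : R)
  : Prop :=
  forall Sr Sw f, valid_adversary rho_r rho_w Sr Sw f ->
  forall m : Msg,
    \big[Rplus/R0]_(c : word Sigma N | Dec (GRing.add c (f c)) != m) Enc m c <= delta.

Definition awtp_code (Sigma : finZmodType) (N : nat) (Msg : finType)
  (Enc : Msg -> word Sigma N -> R) (Dec : word Sigma N -> Msg)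
  (rho_r rho_w eps delta : R) : Prop :=
  (forall m, is_pmf (Enc m)) /\
  awtp_secret Enc rho_r eps /\
  awtp_reliable Enc Dec rho_r rho_w delta.

Definition unif (Msg : finType) (m : Msg) : R := / INR #|Msg|.
Definition joint_MC (Sigma : finZmodType) (N : nat) (Msg : finType)
  (Enc : Msg -> word Sigma N -> R) (S : {set 'I_N}) (m : Msg) (v : word Sigma N) : R :=
  unif m * view_dist Enc S m v.

(* Main.v *)
Require Import Defs.
From HB Require Import structures.
From mathcomp Require Import all_boot all_algebra.
From Stdlib Require Import Reals Lra.
Local Open Scope R_scope.

Lemma bigRM (I : Type) (r : seq I) (P : pred I) (F : I -> R) c :
  \big[Rplus/R0]_(i <- r | P i) (c * F i) = c * \big[Rplus/R0]_(i <- r | P i) F i.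
Proof. by elim/big_rec2: _ => [|i x y _ ->]; ring. Qed.

Lemma bigRle (I : Type) (r : seq I) (P : pred I) (F G : I -> R) :
  (forall i, P i -> F i <= G i) ->
  \big[Rplus/R0]_(i <- r | P i) F i <= \big[Rplus/R0]_(i <- r | P i) G i.
Proof. move=> H; elim/big_ind2: _ => //; [lra| move=> *; lra]. Qed.

Lemma bigR0 (I : Type) (r : seq I) (P : pred I) (F : I -> R) :
  (forall i, P i -> 0 <= F i) -> 0 <= \big[Rplus/R0]_(i <- r | P i) F i.
Proof. move=> H; elim/big_ind: _ => //; [lra| move=> *; lra]. Qed.

Lemma bigRconst (T : finType) c : \big[Rplus/R0]_(t : T) c = INR #|T| * c.
Proof.
rewrite big_const_seq count_predT (_ : size (index_enum T) = #|T|); last by rewrite cardT enumT.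
elim: #|T| => [|n IH] /=; first ring.
rewrite IH; case: n {IH} => [|n] /=; ring.
Qed.

Lemma bigRmax (I : Type) (r : seq I) (P : pred I) (F : I -> R) :
  Rmax (\big[Rplus/R0]_(i <- r | P i) F i) 0 <= \big[Rplus/R0]_(i <- r | P i) Rmax (F i) 0.
Proof.
elim/big_ind2: _ => //.
- rewrite Rmax_left; lra.
- move=> x1 x2 y1 y2 H1 H2.
  have := Rmax_l x2 0; have := Rmax_r x2 0; have := Rmax_l y2 0; have := Rmax_r y2 0.
  move=> *; apply: Rmax_lub; lra.
- move=> *; lra.
Qed.

Lemma ln_le' x y : 0 < x -> x <= y -> ln x <= ln y.
Proof. move=> Hx [Hxy|->]; last lra. by left; apply: ln_increasing. Qed.

Lemma ln_sub1 x : 0 < x -> ln x <= x - 1.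
Proof. move=> Hx; have := exp_ineq1_le (ln x); rewrite exp_ln //; lra. Qed.

Lemma bigRopp (I : Type) (r : seq I) (P : pred I) (F : I -> R) :
  \big[Rplus/R0]_(i <- r | P i) (- F i) = - \big[Rplus/R0]_(i <- r | P i) F i.
Proof. by elim/big_rec2: _ => [|i x y _ ->]; ring. Qed.

Lemma restrictK (Sigma : finZmodType) (N : nat) (S : {set 'I_N}) (c : word Sigma N) :
  restrict S (restrict S c) = restrict S c.
Proof. by rewrite /restrict; apply/ffunP => i; rewrite !ffunE; case: ifP => // ->. Qed.

Lemma view_ge0 (Sigma : finZmodType) (N : nat) (Msg : finType)
  (Enc : Msg -> word Sigma N -> R) S m v :
  (forall c, 0 <= Enc m c) -> 0 <= view_dist Enc S m v.
Proof. by move=> H; apply: bigR0. Qed.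

Lemma view_sum (Sigma : finZmodType) (N : nat) (Msg : finType)
  (Enc : Msg -> word Sigma N -> R) S m :
  rsum (Enc m) = 1 -> rsum (view_dist Enc S m) = 1.
Proof.
rewrite /rsum /view_dist => <-.
rewrite [in RHS](partition_big (restrict S) predT) //.
Qed.

Lemma view_supp (Sigma : finZmodType) (N : nat) (Msg : finType)
  (Enc : Msg -> word Sigma N -> R) S m v :
  view_dist Enc S m v <> 0 -> restrict S v = v.
Proof.
move=> H; apply/eqP; apply/negPn/negP => Hv; apply: H.
rewrite /view_dist big1 // => c /eqP Hc.
by move: Hv; rewrite -Hc restrictK eqxx.
Qed.

Lemma pw (U p q : R) : 0 < U -> 0 <= p -> / U * p <= q ->
  ln U / ln 2 * (/ U * p) + q * xlogx (/ U * p / q) =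
  / ln 2 * (if Rlt_dec 0 p then / U * p * ln (p / q) else 0).
Proof.
move=> HU Hp Hq.
have Hu : 0 < / U by apply: Rinv_0_lt_compat.
have Hln2 : 0 < ln 2 by have := ln_lt_2; lra.
case: (Rlt_dec 0 p) => [Hp0|Hp0] /=.
- have Hq0 : 0 < q by have := Rmult_lt_0_compat _ _ Hu Hp0; lra.
  rewrite /xlogx.
  have Hx : 0 < / U * p / q by apply: Rdiv_lt_0_compat => //; apply: Rmult_lt_0_compat.
  case: (Rle_dec (/ U * p / q) 0) => [?|_] /=; first lra.
  rewrite /log2 /Rdiv !ln_mult //; try apply: Rinv_0_lt_compat => //.
  rewrite !ln_Rinv //. field; lra.
  by apply: Rmult_lt_0_compat.
- have -> : p = 0 by lra.
  rewrite /xlogx Rmult_0_r /Rdiv Rmult_0_l.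
  case: (Rle_dec 0 0) => [_|?] /=; [ring | lra].
Qed.

Lemma q_ge (Sigma : finZmodType) (N : nat) (Msg : finType)
  (Enc : Msg -> word Sigma N -> R) S m v :
  (forall m c, 0 <= Enc m c) -> 0 < INR #|Msg| ->
  / INR #|Msg| * view_dist Enc S m v <= marg2 (joint_MC Enc S) v.
Proof.
move=> H0 HU; rewrite /marg2 /rsum (bigD1 m) //=.
match goal with |- context[Rplus _ ?X] => have : 0 <= X end.
  apply: bigR0 => i _; apply: Rmult_le_pos; last by apply: view_ge0.
  by left; apply: Rinv_0_lt_compat.
rewrite /joint_MC /unif; set u := / INR _ => ?; lra.
Qed.

Lemma q_sum (Sigma : finZmodType) (N : nat) (Msg : finType)
  (Enc : Msg -> word Sigma N -> R) S :
  (forall m, rsum (Enc m) = 1) -> 0 < INR #|Msg| ->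
  \big[Rplus/R0]_(v : word Sigma N) \big[Rplus/R0]_(m : Msg) (/ INR #|Msg| * view_dist Enc S m v) = 1.
Proof.
move=> H1 HU; rewrite exchange_big /=.
rewrite (eq_bigr (fun _ => / INR #|Msg|)); last first.
  move=> m _; rewrite bigRM.
  have E : \big[Rplus/R0]_(i : word Sigma N) view_dist Enc S m i = 1 by exact: view_sum.
  by rewrite E Rmult_1_r.
rewrite bigRconst; field; lra.
Qed.

Lemma mi_identity (Sigma : finZmodType) (N : nat) (Msg : finType)
  (Enc : Msg -> word Sigma N -> R) S :
  (forall m c, 0 <= Enc m c) -> (forall m, rsum (Enc m) = 1) -> 0 < INR #|Msg| ->
  entropy (@unif Msg) - cond_entropy (joint_MC Enc S) =
  / ln 2 * \big[Rplus/R0]_(v : word Sigma N) \big[Rplus/R0]_(m : Msg)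
    (if Rlt_dec 0 (view_dist Enc S m v) then
       / INR #|Msg| * view_dist Enc S m v *
         ln (view_dist Enc S m v / marg2 (joint_MC Enc S) v) else 0).
Proof.
move=> H0 H1 HU.
have Hu : 0 < / INR #|Msg| by apply: Rinv_0_lt_compat.
have Hln2 : 0 < ln 2 by have := ln_lt_2; lra.
have -> : entropy (@unif Msg) = ln (INR #|Msg|) / ln 2.
  rewrite /entropy /rsum /unif bigRconst /xlogx.
  case: (Rle_dec (/ INR #|Msg|) 0) => [Hc|Hc] /=; first lra.
  rewrite /log2 ln_Rinv //. field; split; apply: Rgt_not_eq; first [exact: Hln2| exact: HU].
rewrite /cond_entropy /entropy /rsum.
set L := ln (INR #|Msg|) / ln 2.
have E1 : L = \big[Rplus/R0]_(v : word Sigma N) \big[Rplus/R0]_(m : Msg)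
             (L * (/ INR #|Msg| * view_dist Enc S m v)).
  rewrite (eq_bigr (fun v => L * \big[Rplus/R0]_(m : Msg) (/ INR #|Msg| * view_dist Enc S m v))).
    by rewrite bigRM (@q_sum _ _ _ Enc S H1 HU) Rmult_1_r.
  by move=> v _; rewrite bigRM.
rewrite {1}E1 /Rminus -bigRopp -big_split /= -bigRM.
apply: eq_bigr => v _.
have -> : forall a b : R, -(a * - b) = a * b by move=> *; ring.
rewrite -!bigRM -big_split /=.
apply: eq_bigr => m _.
rewrite /L.
apply: pw => //; first by apply: view_ge0.
exact: q_ge.
Qed.

Lemma ln_div' a b : 0 < a -> 0 < b -> ln (a / b) = ln a - ln b.
Proof.
move=> Ha Hb; have Hb' : 0 < / b by apply: Rinv_0_lt_compat.
rewrite /Rdiv ln_mult // ln_Rinv //; ring.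
Qed.

Lemma div_le a b c : 0 < b -> a <= c * b -> a / b <= c.
Proof.
move=> Hb H; have Hb' := Rinv_0_lt_compat _ Hb.
have := Rmult_le_compat_r (/ b) _ _ (Rlt_le _ _ Hb') H.
have -> : c * b * / b = c by field; lra.
done.
Qed.

Lemma pointwise (u p q lam K s : R) :
  0 < u -> 0 <= p -> p <= 1 -> u * p <= q -> 0 < lam < 1 -> 1 <= K ->
  0 <= s -> (0 < p -> s = lam / K) ->
  (if Rlt_dec 0 p then u * p * ln (p / q) else 0) <=
  u * (Rmin p q * (- ln (1 - lam)) + Rmax (p - q) 0 * (1 + ln (K / lam))) +
  (if Rlt_dec 0 q then u * p * (((1 - lam) * q + s) / q - 1) else 0).
Proof.
move=> Hu Hp0 Hp1 Hq Hl HK Hs Hsp.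
case: (Rlt_dec 0 p) => [Hp|Hp] /=; last first.
  have -> : p = 0 by lra.
  have Hq0 : 0 <= q by nra.
  rewrite Rmin_left // (Rmax_right (0 - q)); last lra.
  case: (Rlt_dec 0 q) => _ /=; lra.
have Hup : 0 < u * p by apply: Rmult_lt_0_compat.
have Hq0 : 0 < q by lra.
case: (Rlt_dec 0 q) => [_|?] /=; last lra.
set r := (1 - lam) * q + s.
have Hr : (1 - lam) * q <= r by rewrite /r; lra.
have Hr0 : 0 < r by nra.
have HK0 : 0 < K by lra.
have Hs' := Hsp Hp.
have Hr1 : lam / K <= r by rewrite /r Hs'; nra.
have Hlk : 0 < lam / K by apply: Rdiv_lt_0_compat; lra.
have A1 : ln r - ln q <= r / q - 1 by rewrite -ln_div' //; apply: ln_sub1; apply: Rdiv_lt_0_compat.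
have A2 : ln p - ln q <= p / q - 1 by rewrite -ln_div' //; apply: ln_sub1; apply: Rdiv_lt_0_compat.
have A3 : ln q - ln r <= - ln (1 - lam).
  rewrite -ln_div' // -ln_Rinv; last lra.
  apply: ln_le'; first by apply: Rdiv_lt_0_compat.
  apply: div_le => //.
  have Hl1 : 0 < / (1 - lam) by apply: Rinv_0_lt_compat; lra.
  have := Rmult_le_compat_l _ _ _ (Rlt_le _ _ Hl1) Hr.
  rewrite -Rmult_assoc Rinv_l; lra.
have A5 : ln p - ln r <= ln (K / lam).
  rewrite -ln_div' //; apply: ln_le'; first by apply: Rdiv_lt_0_compat.
  apply: div_le => //.
  have Hl1 : 0 < K / lam by apply: Rdiv_lt_0_compat; lra.
  have := Rmult_le_compat_l _ _ _ (Rlt_le _ _ Hl1) Hr1.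
  have -> : K / lam * (lam / K) = 1 by field; lra.
  lra.
rewrite ln_div' //.
case: (Rle_dec p q) => Hpq.
- rewrite Rmin_left // Rmax_right; last lra.
  have A6 : ln p <= ln q by apply: ln_le'.
  have X : ln p - ln q <= - ln (1 - lam) + (r / q - 1) by lra.
  have B := Rmult_le_compat_l _ _ _ (Rlt_le _ _ Hup) X.
  apply: Rle_trans B _; right; ring.
- rewrite Rmin_right; last lra. rewrite Rmax_left; last lra.
  have h1 := Rmult_le_compat_l _ _ _ (Rlt_le _ _ Hq0) A2.
  have h2 := Rmult_le_compat_l _ _ _ (Rlt_le _ _ Hq0) A3.
  have Hpq' : 0 <= p - q by lra.
  have h3 := Rmult_le_compat_l _ _ _ Hpq' A5.
  have h4 := Rmult_le_compat_l _ _ _ Hp0 A1.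
  have e1 : q * (p / q - 1) = p - q by field; lra.
  rewrite e1 in h1.
  have X : p * (ln p - ln q) <= q * (- ln (1 - lam)) + (p - q) * (1 + ln (K / lam)) + p * (r / q - 1).
    nra.
  have B := Rmult_le_compat_l _ _ _ (Rlt_le _ _ Hu) X.
  apply: Rle_trans _ (Rle_trans _ _ _ B _); right; ring.
Qed.

Lemma bigRsub (I : Type) (r : seq I) (P : pred I) (F G : I -> R) :
  \big[Rplus/R0]_(i <- r | P i) (F i - G i) =
  \big[Rplus/R0]_(i <- r | P i) F i - \big[Rplus/R0]_(i <- r | P i) G i.
Proof. by elim/big_rec3: _ => [|i x y z _ ->]; ring. Qed.

Lemma pos_part_sum (T : finType) (p p' : T -> R) :
  rsum p = 1 -> rsum p' = 1 ->
  \big[Rplus/R0]_(t : T) Rmax (p t - p' t) 0 = stat_dist p p'.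
Proof.
move=> H H'; rewrite /stat_dist.
rewrite (eq_bigr (fun t => / 2 * (Rabs (p t - p' t) + (p t - p' t)))); last first.
  move=> t _; rewrite /Rmax; case: Rle_dec => h.
  - rewrite Rabs_left1 //; ring.
  - rewrite Rabs_right; [field | lra].
rewrite bigRM big_split /= bigRsub.
move: H H'; rewrite /rsum => -> ->; ring.
Qed.

Lemma dsum (Sigma : finZmodType) (N : nat) (Msg : finType)
  (Enc : Msg -> word Sigma N -> R) S eps m :
  (forall m c, 0 <= Enc m c) -> (forall m, rsum (Enc m) = 1) -> 0 < INR #|Msg| ->
  (forall m m', stat_dist (view_dist Enc S m) (view_dist Enc S m') <= eps) ->
  \big[Rplus/R0]_(v : word Sigma N)
     Rmax (view_dist Enc S m v - marg2 (joint_MC Enc S) v) 0 <= eps.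
Proof.
move=> H0 H1 HU Hsec.
set u := / INR #|Msg|.
have Hu : 0 < u by apply: Rinv_0_lt_compat.
apply: (@Rle_trans _ (\big[Rplus/R0]_(v : word Sigma N) \big[Rplus/R0]_(m' : Msg)
    (u * Rmax (view_dist Enc S m v - view_dist Enc S m' v) 0))).
  apply: bigRle => v _.
  have -> : view_dist Enc S m v - marg2 (joint_MC Enc S) v =
     \big[Rplus/R0]_(m' : Msg) (u * (view_dist Enc S m v - view_dist Enc S m' v)).
    rewrite bigRM bigRsub bigRconst /marg2 /rsum /joint_MC /unif -/u.
    rewrite bigRM /u; field; lra.
  apply: Rle_trans (bigRmax _ _ _ _) _.
  apply: bigRle => m' _.
  rewrite -{1}(Rmult_0_r u) RmaxRmult; [apply: Rle_refl | lra].
rewrite exchange_big /=.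
apply: (@Rle_trans _ (\big[Rplus/R0]_(m' : Msg) (u * eps))).
  apply: bigRle => m' _; rewrite bigRM; apply: Rmult_le_compat_l; first lra.
  rewrite pos_part_sum; first exact: Hsec.
  - exact: view_sum.
  - exact: view_sum.
rewrite bigRconst /u; right; field; lra.
Qed.

Lemma card_supp (Sigma : finZmodType) (N : nat) (S : {set 'I_N}) :
  leq #|[set v : word Sigma N | restrict S v == v]| (expn #|Sigma| #|S|).
Proof.
rewrite -(card_pffun_on (GRing.zero : Sigma) S (predT : pred Sigma)).
apply: subset_leq_card; apply/subsetP => v; rewrite inE => /eqP Hv.
apply/pffun_onP; split => //.
apply/subsetP => i; rewrite inE => Hi; apply/negPn/negP => HiS.
by move: Hi; rewrite -Hv ffunE (negbTE HiS) eqxx.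
Qed.

Lemma card_supp_pos (Sigma : finZmodType) (N : nat) (S : {set 'I_N}) :
  leq 1 #|[set v : word Sigma N | restrict S v == v]|.
Proof.
apply/card_gt0P; exists (restrict S [ffun => GRing.zero]).
by rewrite inE restrictK.
Qed.

Lemma sum_ind (Sigma : finZmodType) (N : nat) (S : {set 'I_N}) c :
  \big[Rplus/R0]_(v : word Sigma N) (if restrict S v == v then c else 0) =
  INR #|[set v : word Sigma N | restrict S v == v]| * c.
Proof.
rewrite -big_mkcond /=.
rewrite (eq_bigl (fun v => v \in [set v : word Sigma N | restrict S v == v])); last first.
  by move=> v; rewrite inE.
rewrite big_const.
elim: #|_| => [|n IH] /=; first ring.
rewrite IH; case: n {IH} => [|n] /=; ring.
Qed.

Lemma main_bound (Sigma : finZmodType) (N : nat) (Msg : finType)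
  (Enc : Msg -> word Sigma N -> R) S eps :
  (forall m c, 0 <= Enc m c) -> (forall m, rsum (Enc m) = 1) -> 0 < INR #|Msg| ->
  (forall m m', stat_dist (view_dist Enc S m) (view_dist Enc S m') <= eps) ->
  0 < eps < 1 ->
  \big[Rplus/R0]_(v : word Sigma N) \big[Rplus/R0]_(m : Msg)
    (if Rlt_dec 0 (view_dist Enc S m v) then
       / INR #|Msg| * view_dist Enc S m v *
         ln (view_dist Enc S m v / marg2 (joint_MC Enc S) v) else 0)
  <= - ln (1 - eps) + eps * (1 + ln (INR #|[set v : word Sigma N | restrict S v == v]| / eps)).
Proof.
move=> H0 H1 HU Hsec He.
set K := INR #|[set v : word Sigma N | restrict S v == v]|.
set u := / INR #|Msg|.
set q := marg2 (joint_MC Enc S).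
set L1 := - ln (1 - eps).
set C := 1 + ln (K / eps).
have Hu : 0 < u by apply: Rinv_0_lt_compat.
have HK : 1 <= K.
  rewrite /K; have := card_supp_pos Sigma N S; move/leP/le_INR; rewrite /=; lra.
have HL1 : 0 <= L1.
  rewrite /L1; have : ln (1 - eps) <= ln 1 by apply: ln_le'; lra.
  rewrite ln_1; lra.
have HC : 0 <= C.
  rewrite /C; have : ln 1 <= ln (K / eps).
    apply: ln_le'; first lra.
    rewrite /Rdiv; have : 1 < / eps by rewrite -Rinv_1; apply: Rinv_lt_contravar; lra.
    nra.
  rewrite ln_1; lra.
set s := fun v : word Sigma N => if restrict S v == v then eps / K else 0.
set r := fun v => (1 - eps) * q v + s v.
have Hq0 : forall v, 0 <= q v.
  move=> v; apply: bigR0 => m _; rewrite /joint_MC.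
  apply: Rmult_le_pos; [exact: Rlt_le | exact: view_ge0].
have Hqm : forall v, \big[Rplus/R0]_(m : Msg) (u * view_dist Enc S m v) = q v by [].
have Hs0 : forall v, 0 <= s v.
  by move=> v; rewrite /s; case: ifP => _; [apply: Rlt_le; apply: Rdiv_lt_0_compat; lra | lra].
have Hp1 : forall m v, view_dist Enc S m v <= 1.
  move=> m v; have := @view_sum _ _ _ Enc S m (H1 m); rewrite /rsum (bigD1 v) //= => E.
  move: E; set X := (X in _ + X = _) => E.
  have : 0 <= X by apply: bigR0 => i _; apply: view_ge0.
  lra.
apply: (@Rle_trans _ (\big[Rplus/R0]_(v : word Sigma N) \big[Rplus/R0]_(m : Msg)
   (u * (Rmin (view_dist Enc S m v) (q v) * L1 + Rmax (view_dist Enc S m v - q v) 0 * C) +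
    (if Rlt_dec 0 (q v) then u * view_dist Enc S m v * (r v / q v - 1) else 0)))).
  apply: bigRle => v _; apply: bigRle => m _.
  apply: pointwise => //; try lra.
  - exact: view_ge0.
  - exact: q_ge.
  - move=> Hp; rewrite /s (@view_supp _ _ _ Enc S m v); last lra.
    by rewrite eqxx.
rewrite (eq_bigr (fun v =>
   \big[Rplus/R0]_(m : Msg) (u * (Rmin (view_dist Enc S m v) (q v) * L1 + Rmax (view_dist Enc S m v - q v) 0 * C)) +
   \big[Rplus/R0]_(m : Msg) (if Rlt_dec 0 (q v) then u * view_dist Enc S m v * (r v / q v - 1) else 0))); last first.
  by move=> v _; rewrite big_split.
rewrite big_split /=.
have PB : \big[Rplus/R0]_(v : word Sigma N) \big[Rplus/R0]_(m : Msg)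
   (if Rlt_dec 0 (q v) then u * view_dist Enc S m v * (r v / q v - 1) else 0) <= 0.
  apply: (@Rle_trans _ (\big[Rplus/R0]_(v : word Sigma N) (r v - q v))).
    apply: bigRle => v _.
    case: (Rlt_dec 0 (q v)) => Hq /=.
      rewrite (eq_bigr (fun m => (r v / q v - 1) * (u * view_dist Enc S m v))); last first.
        by move=> m _; rewrite Rmult_comm.
      rewrite bigRM Hqm; right; field; lra.
    rewrite big1 // /r; have := Hq0 v; have := Hs0 v; have : q v = 0 by have := Hq0 v; lra.
    move=> ->; lra.
  rewrite bigRsub /r big_split /= bigRM /s sum_ind.
  have Qs : \big[Rplus/R0]_(v : word Sigma N) q v = 1.
    rewrite -(@q_sum _ _ _ Enc S H1 HU); apply: eq_bigr => v _; by rewrite -Hqm.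
  rewrite Qs -/K; right; field; lra.
have PA : \big[Rplus/R0]_(v : word Sigma N) \big[Rplus/R0]_(m : Msg)
   (u * (Rmin (view_dist Enc S m v) (q v) * L1 + Rmax (view_dist Enc S m v - q v) 0 * C))
   <= L1 + eps * C.
  rewrite exchange_big /=.
  apply: (@Rle_trans _ (\big[Rplus/R0]_(m : Msg) (u * (L1 + eps * C)))); last first.
    rewrite bigRconst /u; right; field; lra.
  apply: bigRle => m _; rewrite bigRM; apply: Rmult_le_compat_l; first lra.
  rewrite big_split /=.
  have Ha : \big[Rplus/R0]_(v : word Sigma N) (Rmin (view_dist Enc S m v) (q v) * L1) <= L1.
    rewrite (eq_bigr (fun v => L1 * Rmin (view_dist Enc S m v) (q v))); last first.
      by move=> v _; rewrite Rmult_comm.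
    rewrite bigRM; rewrite -[X in _ <= X]Rmult_1_r; apply: Rmult_le_compat_l => //.
    have := @view_sum _ _ _ Enc S m (H1 m); rewrite /rsum => <-.
    apply: bigRle => v _; exact: Rmin_l.
  have Hd : \big[Rplus/R0]_(v : word Sigma N) (Rmax (view_dist Enc S m v - q v) 0 * C) <= eps * C.
    rewrite (eq_bigr (fun v => C * Rmax (view_dist Enc S m v - q v) 0)); last first.
      by move=> v _; rewrite Rmult_comm.
    rewrite bigRM Rmult_comm; apply: Rmult_le_compat_r => //.
    exact: dsum.
  exact: Rplus_le_compat Ha Hd.
apply: Rle_trans (Rplus_le_compat _ _ _ _ PA PB) _; lra.
Qed.

Lemma arith (X eps K Sg nn : R) :
  0 < eps -> eps <= exp (-3) -> 1 <= K -> 1 <= Sg -> 1 <= nn ->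
  ln K <= nn * ln Sg ->
  X <= - ln (1 - eps) + eps * (1 + ln (K / eps)) ->
  / ln 2 * X <= 2 * eps * nn * log2 (Sg / eps).
Proof.
move=> He He3 HK HS Hn HlK HX.
have Hln2 : 0 < ln 2 by have := ln_lt_2; lra.
have E3 : exp (-3) <= / 4.
  have h : exp (-3) * exp 3 = 1.
    by rewrite -exp_plus (_ : -3 + 3 = 0) ?exp_0 //; ring.
  have := exp_ineq1_le 3; have := exp_pos (-3); nra.
have Hle : ln eps <= -3 by rewrite -(ln_exp (-3)); apply: ln_le'.
have HlS : 0 <= ln Sg by have := ln_le' 1 Sg ltac:(lra) HS; rewrite ln_1.
have HL1 : - ln (1 - eps) <= 2 * eps.
  have He1 : 0 < 1 - eps by lra.
  have h := ln_sub1 (/ (1 - eps)) (Rinv_0_lt_compat _ He1).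
  rewrite ln_Rinv in h; last lra.
  have : / (1 - eps) - 1 <= 2 * eps.
    have -> : / (1 - eps) - 1 = eps / (1 - eps) by field; lra.
    apply: div_le; first lra. nra.
  lra.
rewrite ln_div' in HX; try lra.
rewrite /log2 ln_div'; try lra.
have Y : X <= 3 * eps + eps * (nn * ln Sg) + eps * (- ln eps) by nra.
have Z : 3 * eps + eps * (nn * ln Sg) + eps * (- ln eps) <= 2 * eps * nn * (ln Sg - ln eps).
  have h1 : 0 <= eps * (nn * ln Sg) by apply: Rmult_le_pos; [lra | apply: Rmult_le_pos; lra].
  have h2 : 0 <= eps * (2 * nn - 1) * (- ln eps - 3).
    apply: Rmult_le_pos; [apply: Rmult_le_pos|]; lra.
  have h4 : 0 <= eps * (nn - 1) by apply: Rmult_le_pos; lra.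
  nra.
have : X <= 2 * eps * nn * (ln Sg - ln eps) by lra.
move=> W.
have -> : 2 * eps * nn * ((ln Sg - ln eps) / ln 2) = / ln 2 * (2 * eps * nn * (ln Sg - ln eps))
  by field; lra.
apply: Rmult_le_compat_l => //; left; apply: Rinv_0_lt_compat => //.
Qed.

Lemma zero_case (Sigma : finZmodType) (N : nat) (Msg : finType)
  (Enc : Msg -> word Sigma N -> R) (S : {set 'I_N}) :
  (forall m, rsum (Enc m) = 1) -> 0 < INR #|Msg| -> S = set0 ->
  \big[Rplus/R0]_(v : word Sigma N) \big[Rplus/R0]_(m : Msg)
    (if Rlt_dec 0 (view_dist Enc S m v) then
       / INR #|Msg| * view_dist Enc S m v *
         ln (view_dist Enc S m v / marg2 (joint_MC Enc S) v) else 0) = 0.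
Proof.
move=> H1 HU HS.
set z := restrict S ([ffun => GRing.zero] : word Sigma N).
have Hz : forall c, restrict S c = z.
  move=> c; rewrite /z /restrict; apply/ffunP => i; rewrite !ffunE HS in_set0 //.
have Hp : forall m v, view_dist Enc S m v = if z == v then 1 else 0.
  move=> m v; rewrite /view_dist.
  rewrite (eq_bigl (fun _ => z == v)); last by move=> c; rewrite Hz.
  case: (z == v); last by rewrite big_pred0.
  by have := H1 m; rewrite /rsum.
have Hq : forall m v, marg2 (joint_MC Enc S) v = view_dist Enc S m v.
  move=> m v; rewrite /marg2 /rsum /joint_MC /unif.
  rewrite (eq_bigr (fun _ => / INR #|Msg| * view_dist Enc S m v)); last first.
    by move=> m' _; rewrite !Hp.
  rewrite bigRconst; field; lra.
apply: big1 => v _; apply: big1 => m _.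
case: Rlt_dec => //= Hp0.
rewrite -(Hq m v) /Rdiv Rinv_r; last by rewrite (Hq m v); lra.
by rewrite ln_1 Rmult_0_r.
Qed.

Lemma powE (a b : nat) : Nat.pow a b = expn a b.
Proof. by elim: b => [|b IH] //=; rewrite expnS IH. Qed.

Theorem mainTheorem2 :
  exists eps0 : R, 0 < eps0 /\
  forall (Sigma : finZmodType) (N : nat) (Msg : finType)
    (Enc : Msg -> word Sigma N -> R) (Dec : word Sigma N -> Msg)
    (rho_r rho_w eps delta : R),
    0 < INR #|Msg| ->
    0 <= rho_r <= 1 -> 0 <= rho_w <= 1 ->
    0 < eps -> eps <= eps0 -> 0 <= delta ->
    awtp_code Enc Dec rho_r rho_w eps delta ->
    forall (Sr1 Sr2 Sw1 Sw2 : {set 'I_N}) (rho : R),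
      0 <= rho <= 1 ->
      INR #|Sr1| = rho_r * INR N -> INR #|Sr2| = rho_r * INR N ->
      INR #|Sw1| = rho_w * INR N -> INR #|Sw2| = rho_w * INR N ->
      INR #|Sr1 :|: Sw1| = rho * INR N -> INR #|Sr2 :|: Sw2| = rho * INR N ->
      Sr1 :&: Sw2 = set0 ->
      entropy (@unif Msg) - cond_entropy (joint_MC Enc Sr1)
        <= 2 * eps * rho_r * INR N * log2 (INR #|Sigma| / eps).
Proof.
exists (exp (-3)); split; first exact: exp_pos.
move=> Sigma N Msg Enc Dec rho_r rho_w eps delta HU Hrr Hrw He He0 Hd [Hpmf [Hsec _]]
  Sr1 Sr2 Sw1 Sw2 rho Hrho H1 _ _ _ _ _ _.
have H0 : forall m c, 0 <= Enc m c by move=> m c; case: (Hpmf m).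
have H1' : forall m, rsum (Enc m) = 1 by move=> m; case: (Hpmf m).
rewrite (@mi_identity _ _ _ Enc Sr1 H0 H1' HU).
have -> : 2 * eps * rho_r * INR N * log2 (INR #|Sigma| / eps) =
          2 * eps * INR #|Sr1| * log2 (INR #|Sigma| / eps) by rewrite H1; ring.
have Hsec' : forall m m', stat_dist (view_dist Enc Sr1 m) (view_dist Enc Sr1 m') <= eps.
  by move=> m m'; apply: Hsec; rewrite H1; lra.
have Hln2 : 0 < ln 2 by have := ln_lt_2; lra.
case Hn: #|Sr1| => [|n].
  rewrite (@zero_case _ _ _ Enc Sr1 H1' HU); last by apply/eqP; rewrite -cards_eq0 Hn.
  rewrite /=; right; ring.
have E3 : exp (-3) < 1.
  rewrite -exp_0; apply: exp_increasing; lra.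
have HSg : 1 <= INR #|Sigma|.
  have : (1 <= #|Sigma|)%coq_nat.
    apply/leP; apply/card_gt0P; by exists GRing.zero.
  move/le_INR; rewrite /=; lra.
have Hnn : 1 <= INR n.+1 by rewrite S_INR; have := pos_INR n; lra.
apply: (arith _ eps (INR #|[set v : word Sigma N | restrict Sr1 v == v]|)) => //.
- have := card_supp_pos Sigma N Sr1; move/leP/le_INR; rewrite /=; lra.
- rewrite -Hn -ln_pow; last lra.
  rewrite -pow_INR; apply: ln_le'.
    have := card_supp_pos Sigma N Sr1; move/leP/le_INR; rewrite /=; lra.
  apply: le_INR; rewrite powE; apply/leP; exact: card_supp.
- apply: main_bound => //; lra.
Qed.
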